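(* Let $(H,e)$ be a unital Hilbert space. Then, with respect to the matrix pairing between $M(H)$ and $M(\overline H)$, $(\max\overline{\mathfrak c_e})^\boxdot=\min\mathfrak c_e$ and $(\min\overline{\mathfrak c_e})^\boxdot=\max\mathfrak c_e$.
   Context: A Hilbert $*$-space is a complex Hilbert space $H$ (inner product linear in the first variable) with a conjugate-linear map $\zeta\mapsto\zeta^*$, $\zeta^{**}=\zeta$, $(\zeta^*,\eta^* )=\overline{(\zeta,\eta)}$. A unital Hilbert space $(H,e)$ has a fixed hermitian unit vector $e$, and unital cone $\mathfrak c_e=\{\zeta\in H_h:\|\zeta\|\le\sqrt2(\zeta,e)\}$. The conjugate space $\overline H$ (vectors $\bar\eta$, $\lambda\bar\eta=\overline{\bar\lambda\eta}$, $(\bar\zeta,\bar\eta)=\overline{(\zeta,\eta)}$, involution $\bar\eta^*=\overline{\eta^*}$) is a unital Hilbert space with unit $\bar e$ and cone $\overline{\mathfrak c_e}=\{\bar\zeta:\zeta\in\mathfrak c_e\}$; $H,\overline H$ are paired by $\langle\zeta,\bar\eta\rangle=(\zeta,\eta)$. Matrices over $H$ or $\overline H$ carry the involution $[x_{ij}]^*=[x_{ji}^*]$. Matrix pairing: for $\zeta\in M_m(H)$, $\bar\eta=[\overline{\eta_{st}}]\in M_n(\overline H)$, $\langle\langle\zeta,\bar\eta\rangle\rangle=[(\zeta_{ik},\eta_{jl})]_{(i,j),(k,l)}\in M_{mn}$. Quantum polar of a family $\mathfrak M$ of matrices over $H$: $\mathfrak M^\boxdot=\{\bar\eta\in M_n(\overline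 H)_h, n\ge1:\langle\langle\zeta,\bar\eta\rangle\rangle\ge0\ \forall\zeta\in\mathfrak M\}$; symmetrically, for a family $\mathfrak N$ over $\overline H$, $\mathfrak N^\boxdot=\{\zeta\in M_n(H)_h:\langle\langle\zeta,\bar\eta\rangle\rangle\ge0\ \forall\bar\eta\in\mathfrak N\}$ (a set of vectors is a family at level $1$). For a unital Hilbert space $(K,u)$ with cone $\mathfrak c_u$: a state is a linear functional $\sigma$ on $K$ with $\sigma(u)=1$, $\sigma(\mathfrak c_u)\ge0$; $\min\mathfrak c_u\cap M_n(K)=\{x\in M_n(K)_h:[\sigma(x_{ij})]\ge0\ \forall$ states $\sigma\}$; $\max\mathfrak c_u=\mathfrak c_u^{\boxdot\boxdot}$. These apply to $(H,e)$ and to $(\overline H,\bar e)$. *)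

(* Defs.v *)
From HB Require Import structures.
From mathcomp Require Import all_boot all_order all_algebra.
Set Implicit Arguments. Unset Strict Implicit. Unset Printing Implicit Defensive.
Import Order.TTheory GRing.Theory Num.Theory.
Local Open Scope ring_scope.

Section Defs.
Variable C : numClosedFieldType.

(* C is (isomorphic to) the field of complex numbers: its real line has the
   least-upper-bound property (together with algebraic closedness this
   characterises C up to isomorphism). *)
Definition real_lub_complete : Prop :=
  forall A : C -> Prop,
    (forall x, A x -> x \is Num.real) ->
    (exists x, A x) ->
    (exists M, M \is Num.real /\ forall x, A x -> x <= M) ->
    exists s, s \is Num.real /\ (forall x, A x -> x <= s) /\
      (forall M, M \is Num.real -> (forall x, A x -> x <= M) -> s <= M).

Record hilbertStar (V : lmodType C) := HilbertStar {
  ip : V -> V -> C;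
  star : V -> V;
  ip_linl : forall a x y z, ip (a *: x + y) z = a * ip x z + ip y z;
  ip_herm : forall x y, ip y x = (ip x y)^*;
  ip_pos : forall x, 0 <= ip x x;
  ip_def : forall x, ip x x = 0 -> x = 0;
  ip_complete : forall u : nat -> V,
    (forall eps, 0 < eps -> exists N, forall m n, (N <= m)%N -> (N <= n)%N ->
        sqrtC (ip (u m - u n) (u m - u n)) < eps) ->
    exists l, forall eps, 0 < eps -> exists N, forall n, (N <= n)%N ->
        sqrtC (ip (u n - l) (u n - l)) < eps;
  star_semilin : forall a x y, star (a *: x + y) = a^* *: star x + star y;
  star_invol : forall x, star (star x) = x;
  star_ip : forall x y, ip (star x) (star y) = (ip x y)^*
}.

(* The conjugate space: same additive group, scalar action a . x := a^* x. *)
Definition conjsp (V : lmodType C) : Type := V.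
End Defs.

Section Conj.
Variable C : numClosedFieldType.
Variable V : lmodType C.
HB.instance Definition _ := GRing.Zmodule.on (conjsp V).
Definition conj_scale (a : C) (v : conjsp V) : conjsp V := (a^* *: (v : V)).
Lemma conj_scalerA a b v : conj_scale a (conj_scale b v) = conj_scale (a * b) v.
Proof. by rewrite /conj_scale scalerA rmorphM. Qed.
Lemma conj_scale1r : left_id 1 conj_scale.
Proof. by move=> v; rewrite /conj_scale rmorph1 scale1r. Qed.
Lemma conj_scalerDr : right_distributive conj_scale +%R.
Proof. by move=> a u v; rewrite /conj_scale scalerDr. Qed.
Lemma conj_scalerDl v : {morph conj_scale^~ v : a b / a + b}.
Proof. by move=> a b; rewrite /conj_scale rmorphD scalerDl. Qed.
HB.instance Definition _ := GRing.Zmodule_isLmodule.Build C (conjsp V)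
  conj_scalerA conj_scale1r conj_scalerDr conj_scalerDl.
End Conj.

Section Cones.
Variable C : numClosedFieldType.

Definition psd (I : finType) (K : I -> I -> C) : Prop :=
  (forall a b, K b a = (K a b)^*) /\
  (forall v : I -> C, 0 <= \sum_a \sum_b (v a)^* * K a b * v b).

Definition family (V : Type) := forall n : nat, 'M[V]_n -> Prop.

Definition fam_eq (V : Type) (F G : family V) : Prop :=
  forall n (x : 'M[V]_n), F n x <-> G n x.

Definition lvl1 (V : Type) (S : V -> Prop) : family V :=
  fun n => match n return 'M[V]_n -> Prop with
           | 1%N => fun x => S (x ord0 ord0)
           | _ => fun _ => False
           end.

Definition hermmx (V : Type) (st : V -> V) n (x : 'M[V]_n) : Prop :=
  forall i j, x i j = st (x j i).

Definition ucone (K : lmodType C) (ipK : K -> K -> C) (stK : K -> K) (u : K)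
  (z : K) : Prop :=
  stK z = z /\ sqrtC (ipK z z) <= sqrtC 2%:R * ipK z u.

Definition is_state (K : lmodType C) (ipK : K -> K -> C) (stK : K -> K) (u : K)
  (s : K -> C) : Prop :=
  (forall a x y, s (a *: x + y) = a * s x + s y) /\ s u = 1 /\
  (forall z, ucone ipK stK u z -> 0 <= s z).

Definition minc (K : lmodType C) (ipK : K -> K -> C) (stK : K -> K) (u : K)
  : family K :=
  fun n x => (0 < n)%N /\ hermmx stK x /\
    forall s, is_state ipK stK u s -> psd (fun i j : 'I_n => s (x i j)).

Variable H : lmodType C.
Variable hs : hilbertStar H.

Definition ipbar (x y : conjsp H) : C := (ip hs (x : H) (y : H))^*.
Definition starbar (x : conjsp H) : conjsp H := star hs (x : H).

Definition mxpair m n (z : 'M[H]_m) (eb : 'M[conjsp H]_n) :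
  'I_m * 'I_n -> 'I_m * 'I_n -> C :=
  fun p q => ip hs (z p.1 q.1) (eb p.2 q.2 : H).

Definition polarH (M : family H) : family (conjsp H) :=
  fun n eb => (0 < n)%N /\ hermmx starbar eb /\
    forall m (z : 'M[H]_m), M m z -> psd (mxpair z eb).

Definition polarHbar (N : family (conjsp H)) : family H :=
  fun n z => (0 < n)%N /\ hermmx (star hs) z /\
    forall m (eb : 'M[conjsp H]_m), N m eb -> psd (mxpair z eb).

Definition maxcH (e : H) : family H :=
  polarHbar (polarH (lvl1 (ucone (ip hs) (star hs) e))).
Definition maxcHbar (e : H) : family (conjsp H) :=
  polarH (polarHbar (lvl1 (ucone ipbar starbar (e : conjsp H)))).
Definition mincH (e : H) : family H := minc (ip hs) (star hs) e.
Definition mincHbar (e : H) : family (conjsp H) :=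
  minc ipbar starbar (e : conjsp H).
End Cones.

(* Main.v *)
Require Import Defs.
From HB Require Import structures.
From mathcomp Require Import all_boot all_order all_algebra ring.
Import Order.TTheory GRing.Theory Num.Theory.
Local Open Scope ring_scope.
Set Implicit Arguments. Unset Strict Implicit.
Section IP.
Variable C : numClosedFieldType.
Variable H : lmodType C.
Variable hs : hilbertStar H.
Local Notation ip := (ip hs).
Local Notation st := (star hs).

Lemma ipDl x y z : ip (x + y) z = ip x z + ip y z.
Proof. by rewrite -[x in LHS]scale1r ip_linl mul1r. Qed.
Lemma ip0l z : ip 0 z = 0.
Proof. have h := ipDl 0 0 z; rewrite addr0 in h. by apply: (addrI (ip 0 z)); rewrite addr0 -h. Qed.
Lemma ipZl a x z : ip (a *: x) z = a * ip x z.
Proof. by rewrite -[a *: x]addr0 ip_linl ip0l addr0. Qed.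
Lemma ipNl x z : ip (- x) z = - ip x z.
Proof. by rewrite -scaleN1r ipZl mulN1r. Qed.
Lemma ipBl x y z : ip (x - y) z = ip x z - ip y z.
Proof. by rewrite ipDl ipNl. Qed.
Lemma ipDr x y z : ip z (x + y) = ip z x + ip z y.
Proof. by rewrite ip_herm ipDl rmorphD /= -!ip_herm. Qed.
Lemma ipZr a x z : ip z (a *: x) = a^* * ip z x.
Proof. by rewrite ip_herm ipZl rmorphM /= -ip_herm. Qed.
Lemma ip0r z : ip z 0 = 0.
Proof. by rewrite ip_herm ip0l rmorph0. Qed.
Lemma ipNr x z : ip z (- x) = - ip z x.
Proof. by rewrite ip_herm ipNl rmorphN /= -ip_herm. Qed.
Lemma ipBr x y z : ip z (x - y) = ip z x - ip z y.
Proof. by rewrite ipDr ipNr. Qed.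
Lemma ip_sumr I (r : seq I) (P : pred I) (F : I -> H) z :
  ip z (\sum_(i <- r | P i) F i) = \sum_(i <- r | P i) ip z (F i).
Proof. by apply: (big_morph _ (fun x y => ipDr x y z) (ip0r z)). Qed.
Lemma ip_suml I (r : seq I) (P : pred I) (F : I -> H) z :
  ip (\sum_(i <- r | P i) F i) z = \sum_(i <- r | P i) ip (F i) z.
Proof. by apply: (big_morph _ (fun x y => ipDl x y z) (ip0l z)). Qed.

Lemma st_add x y : st (x + y) = st x + st y.
Proof. by rewrite -[x in LHS]scale1r star_semilin rmorph1 scale1r. Qed.
Lemma st0 : st 0 = 0.
Proof. have h := st_add 0 0; rewrite addr0 in h. by apply: (addrI (st 0)); rewrite addr0 -h. Qed.
Lemma stZ a x : st (a *: x) = a^* *: st x.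
Proof. by rewrite -[a *: x]addr0 star_semilin st0 addr0. Qed.
Lemma stB x y : st (x - y) = st x - st y.
Proof. by rewrite -[- y]scaleN1r [x + _]addrC star_semilin rmorphN1 scaleN1r addrC. Qed.
Lemma st_sum I (r : seq I) (P : pred I) (F : I -> H) :
  st (\sum_(i <- r | P i) F i) = \sum_(i <- r | P i) st (F i).
Proof. by apply: (big_morph _ st_add st0). Qed.

Lemma ip_real x y : st x = x -> st y = y -> ip x y \is Num.real.
Proof. by move=> hx hy; rewrite CrealE -star_ip hx hy. Qed.
Lemma ip_ge0 x : 0 <= ip x x. Proof. exact: ip_pos. Qed.
End IP.

Section Cone.
Variable C : numClosedFieldType.

Lemma sqrt_cone (N a : C) : 0 <= N ->
  (sqrtC N <= sqrtC 2%:R * a) <-> (0 <= a /\ N <= 2%:R * a ^+ 2).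
Proof.
move=> N0.
have s2 : 0 < sqrtC (2%:R : C) by rewrite sqrtC_gt0 ltr0n.
have key : 0 <= a -> sqrtC 2%:R * a = sqrtC (2%:R * a ^+ 2).
  by move=> a0; rewrite sqrtCM ?sqrCK // nnegrE ?exprn_ge0 ?ler0n.
split.
- move=> h; have a0 : 0 <= a.
    by rewrite -(pmulr_rge0 _ s2); apply: le_trans h; rewrite sqrtC_ge0.
  split=> //; move: h; rewrite key // ler_sqrtC // nnegrE.
  by rewrite mulr_ge0 ?ler0n ?exprn_ge0.
- case=> a0 h; rewrite key // ler_sqrtC // nnegrE.
  by rewrite mulr_ge0 ?ler0n ?exprn_ge0.
Qed.

Variable H : lmodType C.
Variable hs : hilbertStar H.
Local Notation ip := (ip hs).
Local Notation st := (star hs).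
Variable e : H.
Hypothesis e_herm : st e = e.
Hypothesis e_unit : ip e e = 1.

Definition cone z := st z = z /\ 0 <= ip z e /\ ip z z <= 2%:R * ip z e ^+ 2.

Lemma uconeE z : ucone ip st e z <-> cone z.
Proof.
rewrite /ucone /cone; split.
- by case=> h1 /(sqrt_cone _ (ip_ge0 hs z)) [].
- by case=> h1 h2; split=> //; apply/(sqrt_cone _ (ip_ge0 hs z)).
Qed.

Lemma uconebarE z : ucone (ipbar hs) (starbar hs) (e : conjsp H) z <-> cone z.
Proof.
rewrite /ucone /ipbar /starbar.
have r1 : (ip z z)^* = ip z z by apply/eqP; rewrite -CrealE ger0_real ?ip_ge0.
split.
- case=> h1; rewrite r1.
  have r2 : (ip z e)^* = ip z e by apply/eqP; rewrite -CrealE ip_real.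
  by rewrite r2 => /(sqrt_cone _ (ip_ge0 hs z)) [].
- case=> h1 h2; split=> //; rewrite r1.
  have r2 : (ip z e)^* = ip z e by apply/eqP; rewrite -CrealE ip_real.
  by rewrite r2; apply/(sqrt_cone _ (ip_ge0 hs z)).
Qed.
End Cone.

Section SD.
Variable C : numClosedFieldType.
Variable H : lmodType C.
Variable hs : hilbertStar H.
Local Notation ip := (ip hs).
Local Notation st := (star hs).
Variable e : H.
Hypothesis e_herm : st e = e.
Hypothesis e_unit : ip e e = 1.
Local Notation cone := (cone hs e).

Lemma realC (x : C) : x \is Num.real -> x^* = x.
Proof. by rewrite CrealE => /eqP. Qed.

Lemma ip_e_sym x : st x = x -> ip e x = ip x e.
Proof. by move=> hx; rewrite ip_herm realC // ip_real. Qed.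

Lemma cone_e : cone e.
Proof. split=> //; rewrite e_unit expr1n mulr1; split; [exact: ler01 | by rewrite ler1n]. Qed.

Lemma SD2 w : st w = w -> (forall eta, cone eta -> 0 <= ip w eta) -> cone w.
Proof.
move=> hw hpol.
set a := ip w e.
have a0 : 0 <= a by apply: hpol; exact: cone_e.
have ar : a^* = a by rewrite realC // ger0_real.
set w' := w - a *: e.
set s := sqrtC (ip w' w').
have s0 : 0 <= s by rewrite sqrtC_ge0 ip_ge0.
have sr : s^* = s by rewrite realC // ger0_real.
have w'e : ip w' e = 0 by rewrite /w' ipBl ipZl e_unit mulr1 subrr.
have ew' : ip e w' = 0 by rewrite ip_herm w'e rmorph0.
have ss : s ^+ 2 = ip w' w' by rewrite sqrtCK.
have hw' : st w' = w' by rewrite /w' stB stZ hw e_herm ar.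
have w'w' : ip w' w' = ip w w - a ^+ 2.
  rewrite {1}/w' ipBl ipZl ew' mulr0 subr0 /w' ipBr ipZr ar -/a; ring.
have ww' : ip w w' = ip w w - a ^+ 2.
  rewrite /w' ipBr ipZr ar -/a; ring.
have ha : ip w e = a by [].
clearbody w' s a.
set eta := s *: e - w'.
have ce : cone eta.
  split; first by rewrite /eta stB stZ e_herm sr hw'.
  have etae : ip eta e = s by rewrite /eta ipBl ipZl e_unit w'e; ring.
  rewrite etae; split=> //.
  suff -> : ip eta eta = 2%:R * s ^+ 2 by [].
  rewrite /eta !(ipBl, ipBr, ipZl, ipZr) e_unit w'e ew' sr -ss.
  by rewrite mulr1 !mulr0 subr0 sub0r opprK -expr2 -mulr2n mulr_natl.
have := hpol _ ce.
have -> : ip w eta = s * a - s ^+ 2.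
  by rewrite /eta ipBr ipZr sr ha ww' ss w'w'.
move=> h; split=> //; rewrite ha; split=> //.
have -> : ip w w = s ^+ 2 + a ^+ 2 by rewrite ss w'w' subrK.
have hsa : s ^+ 2 <= a ^+ 2.
  have [->|sp] := eqVneq s 0; first by rewrite expr0n /= exprn_ge0.
  have sp' : 0 < s by rewrite lt_def sp s0.
  have sa : s <= a.
    by rewrite -subr_ge0 -(pmulr_rge0 _ sp'); move: h; rewrite mulrBr expr2.
  by rewrite !expr2 ler_pM.
by rewrite mulrDl mul1r lerD2r.
Qed.

Lemma SD1 z eta : cone z -> cone eta -> 0 <= ip z eta.
Proof.
case=> hz [a0 hza]; case=> he [b0 hzb].
set a := ip z e in a0 hza; set b := ip eta e in b0 hzb.
have [a00|ap] := eqVneq a 0.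
  have : ip z z = 0 by apply/eqP; rewrite eq_le ip_ge0 andbT; move: hza; rewrite a00 expr0n mulr0.
  by move/ip_def->; rewrite ip0l.
have [b00|bp] := eqVneq b 0.
  have : ip eta eta = 0 by apply/eqP; rewrite eq_le ip_ge0 andbT; move: hzb; rewrite b00 expr0n mulr0.
  by move/ip_def->; rewrite ip0r.
have ap' : 0 < a by rewrite lt_def ap a0.
have bp' : 0 < b by rewrite lt_def bp b0.
have ar : a^* = a by rewrite realC // ger0_real.
have br : b^* = b by rewrite realC // ger0_real.
have eza : ip e z = a by rewrite ip_e_sym.
have eeb : ip e eta = b by rewrite ip_e_sym.
set c := ip z eta.
have cr : c^* = c by rewrite realC // ip_real.
have etaz : ip eta z = c by rewrite ip_herm cr.
set u := b *: z + a *: eta - (2%:R * a * b) *: e.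
have := ip_ge0 hs u.
have -> : ip u u = 2%:R * a * b * c - (b ^+ 2 * (2%:R * a ^+ 2 - ip z z) + a ^+ 2 * (2%:R * b ^+ 2 - ip eta eta)).
  rewrite /u !(ipBl, ipBr, ipDl, ipDr, ipZl, ipZr) !rmorphM /= !ar !br rmorphMn /=.
  rewrite e_unit eza eeb etaz -/a -/b -/c. rewrite rmorph1; ring.
move=> h.
have hh : 0 <= 2%:R * a * b * c.
  apply: le_trans h _; rewrite lerBlDr lerDl addr_ge0 // mulr_ge0 ?exprn_ge0 // subr_ge0 //.
by move: hh; rewrite (pmulr_rge0 _ (mulr_gt0 (mulr_gt0 (ltr0n _ 2) ap') bp')).
Qed.
End SD.

Section PSD.
Variable C : numClosedFieldType.
Variable I : finType.
Variable K : I -> I -> C.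

Definition F (u w : I -> C) := \sum_a \sum_b (u a)^* * K a b * w b.

Lemma FDl u1 u2 w : F (fun c => u1 c + u2 c) w = F u1 w + F u2 w.
Proof.
rewrite /F -big_split; apply: eq_bigr => a _; rewrite -big_split.
by apply: eq_bigr => b _; rewrite rmorphD /= !mulrDl.
Qed.
Lemma FDr u w1 w2 : F u (fun c => w1 c + w2 c) = F u w1 + F u w2.
Proof.
rewrite /F -big_split; apply: eq_bigr => a _; rewrite -big_split.
by apply: eq_bigr => b _; rewrite mulrDr.
Qed.
Lemma FZl x u w : F (fun c => x * u c) w = x^* * F u w.
Proof.
rewrite /F mulr_sumr; apply: eq_bigr => a _; rewrite mulr_sumr.
by apply: eq_bigr => b _; rewrite rmorphM /= !mulrA.
Qed.
Lemma FZr x u w : F u (fun c => x * w c) = x * F u w.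
Proof.
rewrite /F mulr_sumr; apply: eq_bigr => a _; rewrite mulr_sumr.
by apply: eq_bigr => b _; rewrite mulrCA mulrA.
Qed.

Definition dl (a : I) := fun c : I => ((c == a)%:R : C).

Lemma sum_dl a (G : I -> C) : \sum_c G c * dl a c = G a.
Proof.
rewrite (bigD1 a) //= /dl eqxx mulr1 big1 ?addr0 // => c /negbTE ->.
by rewrite mulr0.
Qed.

Lemma Fdl a b : F (dl a) (dl b) = K a b.
Proof.
rewrite /F (bigD1 a) //= [X in _ + X]big1 ?addr0; last first.
  by move=> c /negbTE h; apply: big1 => d _; rewrite /dl h rmorph0 !mul0r.
by rewrite sum_dl /dl eqxx rmorph1 mul1r.
Qed.

Lemma realC' (x : C) : x \is Num.real -> x^* = x.
Proof. by rewrite CrealE => /eqP. Qed.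

Lemma psd_form : (forall v, 0 <= F v v) -> psd K.
Proof.
move=> hQ; split; last by move=> v; exact: hQ.
move=> a b.
have hr : forall v, (F v v)^* = F v v by move=> v; rewrite realC' // ger0_real.
have expand : forall x, F (fun c => dl a c + x * dl b c) (fun c => dl a c + x * dl b c)
   = K a a + x * K a b + x^* * K b a + x^* * x * K b b.
  move=> x; rewrite FDl !FDr !FZl !FZr !Fdl; ring.
have ra : (K a a)^* = K a a by rewrite -Fdl hr.
have rb : (K b b)^* = K b b by rewrite -Fdl hr.
have E1 := hr (fun c => dl a c + 1 * dl b c).
rewrite expand !rmorphD !rmorphM /= rmorph1 ra rb in E1.
have E2 := hr (fun c => dl a c + 'i * dl b c).
rewrite expand !rmorphD !rmorphM /= ra rb conjCK conjCi in E2.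
set X := K a b in E1 E2 *; set Y := K b a in E1 E2 *.
set p := K a a in E1 E2; set q := K b b in E1 E2.
have ii : 'i * 'i + 1 = 0 :> C by rewrite -expr2 sqrCi addNr.
have : 2%:R * (Y - X^*) = 0.
  have -> : 2%:R * (Y - X^*) =
     ((p + 1 * X + 1 * Y + 1 * 1 * q) - (p + 1 * X^* + 1 * Y^* + 1 * 1 * q))
     + 'i * ((p + 'i * X + - 'i * Y + - 'i * 'i * q) - (p + - 'i * X^* + 'i * Y^* + 'i * - 'i * q))
     - ('i * 'i + 1) * (X - Y + X^* - Y^*) by ring.
  by rewrite -E1 -E2 ii !rmorph1 !subrr mulr0 mul0r addr0 subr0.
move/eqP; rewrite mulf_eq0 pnatr_eq0 /= subr_eq0 => /eqP.
by rewrite /Y /X.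
Qed.
End PSD.

Section Lin.
Variable C : numClosedFieldType.

Lemma lin_props (V : lmodType C) (s : V -> C)
  (hl : forall a x y, s (a *: x + y) = a * s x + s y) :
  (forall x y, s (x + y) = s x + s y) /\ s 0 = 0 /\ (forall a x, s (a *: x) = a * s x).
Proof.
have hD : forall x y, s (x + y) = s x + s y.
  by move=> x y; rewrite -[x in LHS]scale1r hl mul1r.
have h0 : s 0 = 0.
  have h := hD 0 0; rewrite addr0 in h.
  by apply: (addrI (s 0)); rewrite addr0 -h.
split=> //; split=> // a x.
by rewrite -[a *: x]addr0 hl h0 addr0.
Qed.

Lemma lin_sum (V : lmodType C) (s : V -> C)
  (hl : forall a x y, s (a *: x + y) = a * s x + s y) n
  (G : 'I_n -> 'I_n -> C) (x : 'I_n -> 'I_n -> V) :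
  s (\sum_i \sum_j G i j *: x i j) = \sum_i \sum_j G i j * s (x i j).
Proof.
have [hD [h0 hZ]] := lin_props hl.
rewrite (big_morph s hD h0); apply: eq_bigr => i _.
by rewrite (big_morph s hD h0); apply: eq_bigr => j _; rewrite hZ.
Qed.

Lemma F_lin (I : finType) (K : I -> I -> C) (v : I -> C) :
  F K v v = \sum_i \sum_j ((v i)^* * v j) * K i j.
Proof.
by rewrite /F; apply: eq_bigr => i _; apply: eq_bigr => j _; rewrite mulrAC.
Qed.

Lemma F_scale (I : finType) (K : I -> I -> C) (c : C) (v : I -> C) :
  F (fun i j => K i j * c) v v = F K v v * c.
Proof.
rewrite /F mulr_suml; apply: eq_bigr => i _; rewrite mulr_suml.
by apply: eq_bigr => j _; rewrite mulrA mulrAC.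
Qed.

Lemma F_zero (I : finType) (v : I -> C) : F (fun _ _ => 0) v v = 0.
Proof.
rewrite /F big1 // => i _; rewrite big1 // => j _; by rewrite mulr0 mul0r.
Qed.

Lemma sum_pair1 n (G : 'I_n * 'I_1 -> C) : \sum_p G p = \sum_i G (i, ord0).
Proof.
transitivity (\sum_i \sum_(k < 1) G (i, k)).
  by rewrite pair_bigA; apply: eq_bigr; case.
by apply: eq_bigr => i _; rewrite big_ord1.
Qed.

Lemma sum_pair1' n (G : 'I_1 * 'I_n -> C) : \sum_p G p = \sum_j G (ord0, j).
Proof.
transitivity (\sum_(k < 1) \sum_j G (k, j)).
  by rewrite pair_bigA; apply: eq_bigr; case.
by rewrite big_ord1.
Qed.
End Lin.

Section Main.
Variable C : numClosedFieldType.
Variable H : lmodType C.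
Variable hs : hilbertStar H.
Variable e : H.
Hypothesis e_herm : star hs e = e.
Hypothesis e_unit : ip hs e e = 1.
Local Notation ip := (ip hs).
Local Notation st := (star hs).

Lemma F_ext (I : finType) (K K' : I -> I -> C) u w :
  (forall i j, K i j = K' i j) -> F K u w = F K' u w.
Proof.
by move=> h; rewrite /F; apply: eq_bigr => i _; apply: eq_bigr => j _; rewrite h.
Qed.

Lemma F_conj (I : finType) (K : I -> I -> C) v :
  F (fun i j => (K i j)^*) (fun i => (v i)^*) (fun i => (v i)^*) = (F K v v)^*.
Proof.
rewrite /F rmorph_sum; apply: eq_bigr => i _; rewrite rmorph_sum.
by apply: eq_bigr => j _; rewrite !rmorphM.
Qed.

Lemma F_mxpair1 n (z : 'M[H]_n) (eb : 'M[conjsp H]_1) (u : 'I_n * 'I_1 -> C) :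
  F (mxpair hs z eb) u u =
  F (fun i j => ip (z i j) (eb ord0 ord0 : H)) (fun i => u (i, ord0)) (fun i => u (i, ord0)).
Proof.
rewrite /F sum_pair1; apply: eq_bigr => i _; rewrite sum_pair1.
by apply: eq_bigr => j _.
Qed.

Lemma F_mxpair2 n (z : 'M[H]_1) (eb : 'M[conjsp H]_n) (u : 'I_1 * 'I_n -> C) :
  F (mxpair hs z eb) u u =
  F (fun i j => ip (z ord0 ord0) (eb i j : H)) (fun j => u (ord0, j)) (fun j => u (ord0, j)).
Proof.
rewrite /F sum_pair1'; apply: eq_bigr => i _; rewrite sum_pair1'.
by apply: eq_bigr => j _.
Qed.

Definition wv n (x : 'I_n -> 'I_n -> H) (v : 'I_n -> C) : H :=
  \sum_i \sum_j ((v i)^* * v j) *: x i j.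

Lemma wv_herm n (x : 'M[H]_n) v : hermmx st x -> st (wv x v) = wv x v.
Proof.
move=> hx; rewrite /wv st_sum.
under eq_bigr => i _ do rewrite st_sum.
rewrite exchange_big /=; apply: eq_bigr => i _; apply: eq_bigr => j _.
by rewrite stZ rmorphM /= conjCK mulrC -hx.
Qed.

Lemma ip_wv n (x : 'I_n -> 'I_n -> H) v eta :
  ip (wv x v) eta = F (fun i j => ip (x i j) eta) v v.
Proof.
rewrite F_lin /wv ip_suml; apply: eq_bigr => i _; rewrite ip_suml.
by apply: eq_bigr => j _; rewrite ipZl.
Qed.

Local Notation ucbar := (ucone (ipbar hs) (starbar hs) (e : conjsp H)).
Local Notation uc := (ucone ip st e).

Lemma cone0 eta : cone hs e eta -> ip eta e = 0 -> eta = 0.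
Proof.
case=> _ [_ h] b0; apply: (@ip_def _ _ hs); apply/eqP.
by rewrite eq_le ip_ge0 andbT; move: h; rewrite b0 expr0n mulr0.
Qed.

Lemma part1 n (z : 'M[H]_n) : polarHbar hs (lvl1 ucbar) z <-> mincH hs e z.
Proof.
split.
- case=> n0 [hz hp]; split=> //; split=> // s [sl [se sp]].
  apply: psd_form => v.
  have h := lin_sum sl (fun i j => (v i)^* * v j) (fun i j => z i j).
  rewrite F_lin -h; apply: sp; apply/uconeE; apply: (SD2 e_herm e_unit).
    exact: (wv_herm v hz).
  move=> eta ce.
  have := ip_wv z v eta; rewrite /wv => ->.
  set M := (\matrix_(i < 1, j < 1) (eta : conjsp H)) : 'M[conjsp H]_1.
  have hM : @lvl1 _ ucbar 1%N M by rewrite /lvl1 /= mxE; apply/(uconebarE e_herm).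
  have [_ hps] := hp 1%N M hM.
  have : 0 <= F (mxpair hs z M) (fun p => v p.1) (fun p => v p.1) := hps _.
  rewrite F_mxpair1 /M.
  by rewrite (@F_ext _ _ (fun i j => ip (z i j) eta)) // => i j; rewrite mxE.
- case=> n0 [hz hs']; split=> //; split=> // [[|[|m]]] eb //= heb.
  apply: psd_form => u; rewrite F_mxpair1.
  set v := fun i => u (i, ord0).
  set eta := (eb ord0 ord0 : H) in heb *.
  have ce : cone hs e eta by apply/(uconebarE e_herm).
  have [b0|bn] := eqVneq (ip eta e) 0.
    have -> : eta = 0 by apply: cone0.
    by rewrite (@F_ext _ _ (fun _ _ => 0)) ?F_zero // => i j; rewrite ip0r.
  have bp : 0 < ip eta e by rewrite lt_def bn; case: ce => _ [].
  set b := ip eta e in bn bp.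
  have st1 : is_state ip st e (fun x => ip x eta * b^-1).
    split; first by move=> a x y; rewrite ip_linl mulrDl mulrA.
    split; first by rewrite (ip_e_sym e_herm) ?divff //; case: ce.
    move=> x /uconeE cx; apply: mulr_ge0; last by rewrite invr_ge0 ltW.
    exact: (SD1 e_herm e_unit cx ce).
  have [_ hq] := hs' _ st1.
  have : 0 <= F _ v v := hq v; rewrite F_scale.
  by rewrite pmulr_lge0 // invr_gt0.
Qed.

Lemma part2 n (eb : 'M[conjsp H]_n) :
  mincHbar hs e eb <-> polarH hs (lvl1 uc) eb.
Proof.
split.
- case=> n0 [heb hp]; split=> //; split=> // [[|[|m]]] z //= hz.
  apply: psd_form => u; rewrite F_mxpair2.
  set v := fun j => u (ord0, j).
  set zeta := z ord0 ord0 in hz *.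
  have ce : cone hs e zeta by apply/uconeE.
  have [b0|bn] := eqVneq (ip zeta e) 0.
    have -> : zeta = 0 by apply: cone0.
    by rewrite (@F_ext _ _ (fun _ _ => 0)) ?F_zero // => i j; rewrite ip0l.
  have bp : 0 < ip zeta e by rewrite lt_def bn; case: ce => _ [].
  set b := ip zeta e in bn bp.
  have st1 : is_state (ipbar hs) (starbar hs) (e : conjsp H)
               (fun x : conjsp H => ip zeta (x : H) * b^-1).
    split.
      move=> a x y.
      change (ip zeta (a^* *: (x : H) + (y : H)) * b^-1 =
              a * (ip zeta (x : H) * b^-1) + ip zeta (y : H) * b^-1).
      by rewrite ipDr ipZr conjCK mulrDl mulrA.
    split; first by rewrite divff.
    move=> x /(uconebarE e_herm) cx; apply: mulr_ge0; last by rewrite invr_ge0 ltW.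
    exact: (SD1 e_herm e_unit ce cx).
  have [_ hq] := hp _ st1.
  have : 0 <= F _ v v := hq v; rewrite F_scale.
  by rewrite pmulr_lge0 // invr_gt0.
- case=> n0 [heb hp]; split=> //; split=> // s [sl [se sp]].
  apply: psd_form => v.
  have h := lin_sum sl (fun i j => (v i)^* * v j) (fun i j => eb i j).
  rewrite F_lin -h; apply: sp; apply/(uconebarE e_herm).
  set ebH := (eb : 'M[H]_n).
  have hebH : hermmx st ebH by [].
  have -> : ((\sum_i \sum_j ((v i)^* * v j) *: eb i j : conjsp H) : H) =
            wv ebH (fun i => (v i)^*).
    rewrite /wv; apply: eq_bigr => i _; apply: eq_bigr => j _.
    change (((v i)^* * v j)^* *: (eb i j : H) = ((v i)^*^* * (v j)^*) *: (eb i j : H)).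
    by rewrite rmorphM.
  apply: (SD2 e_herm e_unit); first exact: wv_herm.
  move=> eta ce; rewrite ip_wv.
  set M := (\matrix_(i < 1, j < 1) eta) : 'M[H]_1.
  have hM : @lvl1 _ uc 1%N M by rewrite /lvl1 /= mxE; apply/uconeE.
  have [_ hps] := hp 1%N M hM.
  have : 0 <= F (mxpair hs M eb) (fun p => v p.2) (fun p => v p.2) := hps _.
  rewrite F_mxpair2 /M.
  rewrite (@F_ext _ _ (fun i j => ip eta (eb i j))); last by move=> i j; rewrite mxE.
  rewrite -conjC_ge0 -F_conj => h0.
  rewrite (@F_ext _ _ (fun i j => (ip eta (eb i j))^*)) // => i j.
  by rewrite -ip_herm.
Qed.
End Main.

Unset Implicit Arguments.
Section Gal.
Variable C : numClosedFieldType.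
Variable H : lmodType C.
Variable hs : hilbertStar H.

Lemma triple (L : Defs.family (conjsp H))
  (hL : forall m (eb : 'M_m), L m eb -> (0 < m)%N /\ hermmx (starbar hs) eb)
  n (z : 'M[H]_n) :
  polarHbar hs (polarH hs (polarHbar hs L)) z <-> polarHbar hs L z.
Proof.
split.
- case=> n0 [hz hp]; split=> //; split=> // m eb hLe.
  apply: hp; have [m0 he] := hL _ _ hLe; split=> //; split=> //.
  by move=> m' z' [_ [_ h]]; exact: h.
- move=> hz; have [n0 [hz' hp]] := hz; split=> //; split=> //.
  by move=> m eb [_ [_ h]]; exact: h.
Qed.

Lemma polar_congr (A B : Defs.family (conjsp H)) : fam_eq A B ->
  fam_eq (polarHbar hs A) (polarHbar hs B).
Proof.
move=> hAB n z; split; case=> n0 [h1 h2]; split=> //; split=> // m eb hb.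
  by apply: h2; apply/hAB.
by apply: h2; apply/hAB.
Qed.
End Gal.

Theorem mainTheorem5 (C : numClosedFieldType) (hC : real_lub_complete C)
  (H : lmodType C) (hs : hilbertStar H) (e : H)
  (e_herm : star hs e = e) (e_unit : ip hs e e = 1) :
  fam_eq (polarHbar hs (maxcHbar hs e)) (mincH hs e) /\
  fam_eq (polarHbar hs (mincHbar hs e)) (maxcH hs e).
Proof.
split.
- move=> n z; rewrite /maxcHbar -(part1 e_herm e_unit); apply: triple.
  move=> [|[|m]] eb //= h; split=> // i j; rewrite !ord1.
  by case: h => ->.
- move=> n z; rewrite /maxcH; apply: polar_congr => m eb.
  exact: part2.
Qed.
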